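(* Let $f$ be a periodic traveling wave of speed $c$ with $c\neq 0$ and $c^2\neq1$. If $\lambda\in\sigma(\mathrm{P})$ and $\operatorname{Re}\lambda\neq 0$, then exactly one of the two Floquet multipliers of (P) lies on the unit circle.
   Context: A traveling wave of speed $c$ is a real solution $f$ of $(c^2-1)f''+\sin f=0$, with energy $E$ given by $\tfrac12(c^2-1)(f')^2+1-\cos f=E$; periodic traveling waves are librational ($0<E<2$) or rotational ($E<0$ if $c^2<1$, $E>2$ if $c^2>1$), with fundamental period $T$ (smallest $T>0$ with $f(z+T)=f(z)\pmod{2\pi}$). Let $\gamma=1/(c^2-1)$. Equation (P): $p''-2c\gamma\lambda p'+\gamma(\lambda^2+\cos f(z))p=0$, written as a first-order system for $(p,p')$; its monodromy matrix is $F(T;\lambda)$ where $F$ is the fundamental matrix with $F(0;\lambda)=I$, and its Floquet multipliers are the eigenvalues of the monodromy matrix. $\sigma(\mathrm{P})$ is the set of $\lambda\in\mathbb{C}$ for which (P) has a nontrivial solution bounded on $\mathbb{R}$. *)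

(* Defs.v *)
From HB Require Import structures.
From mathcomp Require Import all_boot all_order all_algebra.
From mathcomp Require Import all_classical all_reals all_analysis.
From mathcomp Require Import complex.
Set Implicit Arguments. Unset Strict Implicit. Unset Printing Implicit Defensive.
Import Order.TTheory GRing.Theory Num.Theory.
Local Open Scope ring_scope.
Local Open Scope complex_scope.

Section TW.
Variable R : realType.

Definition gam (c : R) : R := (c ^+ 2 - 1)^-1.

Definition traveling_wave (c : R) (f : R -> R) : Prop :=
  forall z : R, derivable f z 1 /\ derivable (derive1 f) z 1 /\
    (c ^+ 2 - 1) * derive1 (derive1 f) z + sin (f z) = 0.

Definition energy (c : R) (f : R -> R) (z : R) : R :=
  2^-1 * (c ^+ 2 - 1) * (derive1 f z) ^+ 2 + 1 - cos (f z).

Definition period_mod2pi (f : R -> R) (S : R) : Prop :=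
  forall z : R, exists k : int, f (z + S) = f z + k%:~R * (2 * pi).

Definition fundamental_period (f : R -> R) (T : R) : Prop :=
  0 < T /\ period_mod2pi f T /\
  forall S : R, 0 < S -> S < T -> ~ period_mod2pi f S.

(* f is a periodic traveling wave of speed c, energy E, fundamental period T:
   librational (0<E<2) or rotational (E<0 if c^2<1, E>2 if c^2>1). *)
Definition periodic_traveling_wave (c : R) (f : R -> R) (E T : R) : Prop :=
  traveling_wave c f /\ (forall z, energy c f z = E) /\
  ((0 < E /\ E < 2) \/ (c ^+ 2 < 1 /\ E < 0) \/ (1 < c ^+ 2 /\ 2 < E)) /\
  fundamental_period f T.

Definition Cderiv (p q : R -> R[i]) : Prop :=
  forall z : R, is_derive z 1 (fun t => complex.Re (p t)) (complex.Re (q z)) /\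
                is_derive z 1 (fun t => complex.Im (p t)) (complex.Im (q z)).

Definition solves_P (c : R) (f : R -> R) (lam : R[i]) (p : R -> R[i]) : Prop :=
  exists p1 p2 : R -> R[i], Cderiv p p1 /\ Cderiv p1 p2 /\
    forall z : R, p2 z - (2 * c * gam c)%:C * lam * p1 z
                  + (gam c)%:C * (lam ^+ 2 + (cos (f z))%:C) * p z = 0.

Definition in_sigmaP (c : R) (f : R -> R) (lam : R[i]) : Prop :=
  exists p : R -> R[i], solves_P c f lam p /\ (exists z, p z != 0) /\
    exists M : R, forall z, `|p z| <= M%:C.

(* coefficient matrix of (P) written as a first order system for (p, p') *)
Definition Pmat (c : R) (f : R -> R) (lam : R[i]) (z : R) : 'M[R[i]]_2 :=
  \matrix_(i < 2, j < 2)
    if i == 0 :> nat then (if j == 0 :> nat then 0 else 1)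
    else (if j == 0 :> nat then - ((gam c)%:C * (lam ^+ 2 + (cos (f z))%:C))
          else (2 * c * gam c)%:C * lam).

Definition mxCderiv (F G : R -> 'M[R[i]]_2) : Prop :=
  forall i j : 'I_2, Cderiv (fun z => F z i j) (fun z => G z i j).

Definition fundamental_matrix (c : R) (f : R -> R) (lam : R[i])
    (F : R -> 'M[R[i]]_2) : Prop :=
  F 0 = 1%:M /\ mxCderiv F (fun z => Pmat c f lam z *m F z).

End TW.

(* Main.v *)
Require Import Defs.
From HB Require Import structures.
From mathcomp Require Import all_boot all_order all_algebra.
From mathcomp Require Import all_classical all_reals all_analysis.
From mathcomp Require Import complex.
From mathcomp Require Import ring lra.
Import Order.TTheory GRing.Theory Num.Theory.
Local Open Scope ring_scope.
Local Open Scope complex_scope.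
Set Implicit Arguments. Unset Strict Implicit.

Section Aux.
Variable R : realType.
Implicit Types (p q : R -> R[i]) (x : R).

Lemma dD (f g : R -> R) (x : R) (df dg : R) : is_derive x (1:R) f df -> is_derive x (1:R) g dg ->
  is_derive x (1:R) (fun t => f t + g t) (df + dg).
Proof. move=> ? ?; exact: (is_deriveD (f:=f) (g:=g)). Qed.
Lemma dB (f g : R -> R) (x : R) (df dg : R) : is_derive x (1:R) f df -> is_derive x (1:R) g dg ->
  is_derive x (1:R) (fun t => f t - g t) (df - dg).
Proof. move=> ? ?; exact: (is_deriveB (f:=f) (g:=g)). Qed.
Lemma dM (f g : R -> R) (x : R) (df dg : R) : is_derive x (1:R) f df -> is_derive x (1:R) g dg ->
  is_derive x (1:R) (fun t => f t * g t) (f x * dg + g x * df).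
Proof. move=> ? ?; exact: (is_deriveM (f:=f) (g:=g)). Qed.
Lemma dC (a : R) (x : R) : is_derive x (1:R) (fun _ : R => a) 0.
Proof. exact: is_derive_cst. Qed.
Lemma dE (f : R -> R) (x d d' : R) : is_derive x (1:R) f d -> d = d' -> is_derive x (1:R) f d'.
Proof. by move=> ? <-. Qed.
Lemma dshift (f : R -> R) (a x d : R) : is_derive (x + a) 1 f d ->
  is_derive x (1:R) (fun t => f (t + a)) d.
Proof.
move=> H; have := @is_derive1_comp R f (shift a) x d 1 H (is_derive_shift x 1 a).
by rewrite mulr1.
Qed.

Lemma ReM (x y : R[i]) : complex.Re (x * y) = complex.Re x * complex.Re y - complex.Im x * complex.Im y.
Proof. by case: x y => [a b] [c d]. Qed.
Lemma ImM (x y : R[i]) : complex.Im (x * y) = complex.Re x * complex.Im y + complex.Im x * complex.Re y.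
Proof. by case: x y => [a b] [c d]. Qed.
Lemma ReD (x y : R[i]) : complex.Re (x + y) = complex.Re x + complex.Re y.
Proof. by case: x y => [a b] [c d]. Qed.
Lemma ImD (x y : R[i]) : complex.Im (x + y) = complex.Im x + complex.Im y.
Proof. by case: x y => [a b] [c d]. Qed.
Lemma ReN (x : R[i]) : complex.Re (- x) = - complex.Re x.
Proof. by case: x. Qed.
Lemma ImN (x : R[i]) : complex.Im (- x) = - complex.Im x.
Proof. by case: x. Qed.

Lemma CD_ext p q q' : Cderiv p q -> (forall z, q z = q' z) -> Cderiv p q'.
Proof. by move=> H E z; rewrite -E; apply: H. Qed.
Lemma CD_extp p p' q : Cderiv p q -> (forall z, p z = p' z) -> Cderiv p' q.
Proof.
move=> H E; have -> : p' = p by apply/funext=> z; rewrite E. exact: H. Qed.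
Lemma CD_const (a : R[i]) : Cderiv (fun _ => a) (fun _ => 0).
Proof. by move=> z; split; apply: dC. Qed.
Lemma dF (f g : R -> R) x d : (forall t, f t = g t) -> is_derive x (1:R) g d ->
  is_derive x (1:R) f d.
Proof. by move=> E; have -> : f = g by apply/funext. Qed.

Lemma CD_add p p' q q' : Cderiv p p' -> Cderiv q q' ->
  Cderiv (fun z => p z + q z) (fun z => p' z + q' z).
Proof.
move=> Hp Hq z; have [a b] := Hp z; have [c d] := Hq z.
split.
  by apply: (dF (g := fun t => complex.Re (p t) + complex.Re (q t))) => [t|]; rewrite ?ReD //; apply: dD.
by apply: (dF (g := fun t => complex.Im (p t) + complex.Im (q t))) => [t|]; rewrite ?ImD //; apply: dD.
Qed.
Lemma CD_opp p p' : Cderiv p p' -> Cderiv (fun z => - p z) (fun z => - p' z).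
Proof.
move=> Hp z; have [a b] := Hp z; split.
  apply: (dF (g := fun t => 0 - complex.Re (p t))) => [t|]; first by rewrite ReN sub0r.
  by rewrite ReN -sub0r; apply: dB => //; apply: dC.
apply: (dF (g := fun t => 0 - complex.Im (p t))) => [t|]; first by rewrite ImN sub0r.
by rewrite ImN -sub0r; apply: dB => //; apply: dC.
Qed.
Lemma CD_mul p p' q q' : Cderiv p p' -> Cderiv q q' ->
  Cderiv (fun z => p z * q z) (fun z => p' z * q z + p z * q' z).
Proof.
move=> Hp Hq z; have [a b] := Hp z; have [c d] := Hq z.
split.
  apply: (dF (g := fun t => complex.Re (p t) * complex.Re (q t) - complex.Im (p t) * complex.Im (q t))) => [t|]; first by rewrite ReM.
  apply: (dE (dB (dM a c) (dM b d))).
  rewrite ReD !ReM; ring.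
apply: (dF (g := fun t => complex.Re (p t) * complex.Im (q t) + complex.Im (p t) * complex.Re (q t))) => [t|]; first by rewrite ImM.
apply: (dE (dD (dM a d) (dM b c))).
rewrite ImD !ImM; ring.
Qed.
Lemma CD_shift p q a : Cderiv p q -> Cderiv (fun z => p (z + a)) (fun z => q (z + a)).
Proof.
move=> H z; have [u v] := H (z + a); split.
  exact: (dshift (f := fun t => complex.Re (p t))).
exact: (dshift (f := fun t => complex.Im (p t))).
Qed.

Definition Nc (w : R[i]) : R := complex.Re w ^+ 2 + complex.Im w ^+ 2.

Lemma dexpl (k x : R) : is_derive x (1:R) (fun t => expR (k * t)) (expR (k * x) * k).
Proof.
have Hl : is_derive x (1:R) (fun t : R => k * t) k.
  apply: (dE (dM (dC k x) (is_derive_id x (1:R)))); rewrite /=; ring.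
exact: (@is_derive1_comp R expR (fun t => k * t) x _ _ (is_derive_expR (k * x)) Hl).
Qed.

Lemma growth p r : Cderiv p (fun z => r * p z) ->
  forall z, Nc (p z) = Nc (p 0) * expR (2 * complex.Re r * z).
Proof.
move=> H z.
set k := 2 * complex.Re r.
pose g t := Nc (p t) * expR ((- k) * t).
have Hg : forall x, is_derive x (1:R) g 0.
  move=> x; have [a b] := H x.
  have HN : is_derive x (1:R) (fun t => Nc (p t)) (k * Nc (p x)).
    apply: (dF (g := fun t => complex.Re (p t) * complex.Re (p t) + complex.Im (p t) * complex.Im (p t))).
      by move=> t; rewrite /Nc !expr2.
    apply: (dE (dD (dM a a) (dM b b))).
    rewrite /Nc /k !ReM !ImM; ring.
  apply: (dE (dM HN (dexpl (- k) x))).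
  ring.
have E : g z = g 0 := is_derive_0_is_cst z 0 Hg.
move: E; rewrite /g mulr0 expR0 mulr1 => <-.
rewrite -mulrA mulNr -expRD addNr expR0 mulr1 //.
Qed.

Lemma Nc_eq0 w : Nc w = 0 -> w = 0.
Proof.
case: w => a b; rewrite /Nc /= => /eqP; rewrite paddr_eq0 ?sqr_ge0 // !sqrf_eq0.
by case/andP=> /eqP -> /eqP ->.
Qed.
Lemma Nc1 : Nc 1 = 1.
Proof. by rewrite /Nc /= expr1n expr0n addr0. Qed.
Lemma Nc0 : Nc 0 = 0.
Proof. by rewrite /Nc /= expr0n addr0. Qed.

Definition sol (Q : R -> R[i]) (r : R[i]) (v0 v1 : R -> R[i]) :=
  Cderiv v0 v1 /\ Cderiv v1 (fun z => - (Q z * v0 z) + r * v1 z).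

Lemma CD_sub p p' q q' : Cderiv p p' -> Cderiv q q' ->
  Cderiv (fun z => p z - q z) (fun z => p' z - q' z).
Proof. by move=> H1 H2; apply: CD_add => //; apply: CD_opp. Qed.

Lemma CD_wr Q r a0 a1 b0 b1 : sol Q r a0 a1 -> sol Q r b0 b1 ->
  Cderiv (fun z => a0 z * b1 z - b0 z * a1 z)
         (fun z => r * (a0 z * b1 z - b0 z * a1 z)).
Proof.
move=> [Ha0 Ha1] [Hb0 Hb1].
apply: CD_ext; first exact: (CD_sub (CD_mul Ha0 Hb1) (CD_mul Hb0 Ha1)).
move=> z /=; ring.
Qed.

Lemma sol_uniq Q r a0 a1 b0 b1 v0 v1 : sol Q r a0 a1 -> sol Q r b0 b1 ->
  a0 0 = 1 -> a1 0 = 0 -> b0 0 = 0 -> b1 0 = 1 -> sol Q r v0 v1 ->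
  forall z, v0 z = a0 z * v0 0 + b0 z * v1 0 /\ v1 z = a1 z * v0 0 + b1 z * v1 0.
Proof.
move=> Ha Hb A0 A1 B0 B1 Hv z.
have Hd := CD_wr Ha Hb.
have d0 : a0 0 * b1 0 - b0 0 * a1 0 = 1 by rewrite A0 A1 B0 B1; ring.
have dnz : a0 z * b1 z - b0 z * a1 z != 0.
  apply/eqP => E; have := growth Hd z; rewrite E d0 Nc0 Nc1 mul1r => /esym.
  by apply/eqP; rewrite expR_eq0.
case: Ha Hb Hv => [Ha0 Ha1] [Hb0 Hb1] [Hv0 Hv1].
have He0 : Cderiv (fun z => (b1 z * v0 z - b0 z * v1 z) - v0 0 * (a0 z * b1 z - b0 z * a1 z))
   (fun z => r * ((b1 z * v0 z - b0 z * v1 z) - v0 0 * (a0 z * b1 z - b0 z * a1 z))).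
  apply: CD_ext.
    exact: (CD_sub (CD_sub (CD_mul Hb1 Hv0) (CD_mul Hb0 Hv1)) (CD_mul (CD_const (v0 0)) Hd)).
  move=> t /=; ring.
have He1 : Cderiv (fun z => (a0 z * v1 z - a1 z * v0 z) - v1 0 * (a0 z * b1 z - b0 z * a1 z))
   (fun z => r * ((a0 z * v1 z - a1 z * v0 z) - v1 0 * (a0 z * b1 z - b0 z * a1 z))).
  apply: CD_ext.
    exact: (CD_sub (CD_sub (CD_mul Ha0 Hv1) (CD_mul Ha1 Hv0)) (CD_mul (CD_const (v1 0)) Hd)).
  move=> t /=; ring.
have E0 := growth He0 z; have E1 := growth He1 z.
rewrite A0 A1 B0 B1 in E0 E1.
have Z0 : 1 * v0 0 - 0 * v1 0 - v0 0 * (1 * 1 - 0 * 0) = 0 by ring.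
have Z1 : 1 * v1 0 - 0 * v0 0 - v1 0 * (1 * 1 - 0 * 0) = 0 by ring.
rewrite Z0 in E0; rewrite Z1 in E1; rewrite Nc0 mul0r in E0 E1.
have {E0}E0 := Nc_eq0 E0; have {E1}E1 := Nc_eq0 E1.
move/eqP: E0; rewrite subr_eq0 => /eqP E0.
move/eqP: E1; rewrite subr_eq0 => /eqP E1.
split; apply: (mulfI dnz).
  transitivity (a0 z * (b1 z * v0 z - b0 z * v1 z) + b0 z * (a0 z * v1 z - a1 z * v0 z)); first ring.
  rewrite E0 E1; ring.
transitivity (a1 z * (b1 z * v0 z - b0 z * v1 z) + b1 z * (a0 z * v1 z - a1 z * v0 z)); first ring.
rewrite E0 E1; ring.
Qed.

Lemma bern (y : R) (n : nat) : 1 <= y -> 1 + n%:R * (y - 1) <= y ^+ n.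
Proof.
move=> y1; elim: n => [|n IH]; first by rewrite mul0r addr0 expr0.
rewrite exprS -natr1.
have h0 : 0 <= y - 1 by rewrite subr_ge0.
have hn : 0 <= n%:R :> R by [].
have H1 : y * (1 + n%:R * (y - 1)) <= y * y ^+ n by rewrite ler_pM2l // (lt_le_trans ltr01 y1).
apply: le_trans H1.
have : 0 <= n%:R * (y - 1) * (y - 1) by rewrite mulr_ge0 // mulr_ge0.
lra.
Qed.

Lemma no_unbounded (y eps B : R) : 1 < y -> 0 < eps ->
  (forall n : nat, eps * y ^+ n <= B) -> False.
Proof.
move=> y1 e0 H.
set h := y - 1.
have h0 : 0 < h by rewrite subr_gt0.
set X := B / (eps * h).
have := archi_boundP (normr_ge0 X).
set n := (X in (X%:R)) => Hn.
have Hb := bern n (ltW y1).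
have := H n.
have XX : X <= `|X| := ler_norm X.
have eh : 0 < eps * h by apply: mulr_gt0.
have BX : B = X * (eps * h) by rewrite /X divfK ?gt_eqF.
rewrite BX => HB.
have : eps * (1 + n%:R * h) <= X * (eps * h).
  apply: le_trans HB; rewrite ler_pM2l //.
have Hn' : X < n%:R by apply: le_lt_trans Hn.
nra.
Qed.

Definition nc (w : R[i]) : R := Num.sqrt (Nc w).

Lemma normE w : `|w| = (nc w)%:C.
Proof. by rewrite normc_def. Qed.
Lemma NcM (x y : R[i]) : Nc (x * y) = Nc x * Nc y.
Proof. rewrite /Nc ReM ImM; ring. Qed.
Lemma Nc_ge0 w : 0 <= Nc w.
Proof. by rewrite /Nc addr_ge0 ?sqr_ge0. Qed.
Lemma ncM (x y : R[i]) : nc (x * y) = nc x * nc y.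
Proof. by rewrite /nc NcM sqrtrM ?Nc_ge0. Qed.
Lemma nc_ge0 w : 0 <= nc w.
Proof. exact: sqrtr_ge0. Qed.
Lemma nc_eq0 w : nc w = 0 -> w = 0.
Proof. by move/eqP; rewrite sqrtr_eq0 => H; apply: Nc_eq0; apply/eqP; rewrite eq_le H Nc_ge0. Qed.
Lemma ncD (x y : R[i]) : nc (x + y) <= nc x + nc y.
Proof. by have := ler_normD x y; rewrite !normE -rmorphD lecR. Qed.
Lemma ncX (x : R[i]) n : nc (x ^+ n) = nc x ^+ n.
Proof. by elim: n => [|n IH]; rewrite ?expr0 ?exprS ?ncM ?IH // /nc /Nc /= expr1n expr0n addr0 sqrtr1. Qed.
Lemma ncN (w : R[i]) : nc (- w) = nc w.
Proof. by rewrite /nc /Nc ReN ImN !sqrrN. Qed.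
Lemma nc0 : nc 0 = 0.
Proof. by rewrite /nc Nc0 sqrtr0. Qed.
Lemma nc1 : nc 1 = 1.
Proof. by rewrite /nc Nc1 sqrtr1. Qed.

Lemma geo (t : int -> R[i]) (mu : R[i]) (B : R) :
  (forall k, t (k + 1) = mu * t k) -> (forall k, nc (t k) <= B) -> nc mu != 1 ->
  forall k, t k = 0.
Proof.
move=> Ht HB Hmu k.
have Hn : forall (j : int) (n : nat), t (j + n%:Z) = mu ^+ n * t j.
  move=> j; elim => [|n IH]; first by rewrite addr0 expr0 mul1r.
  rewrite -addn1 PoszD addrA Ht IH addn1 exprS mulrA //.
apply/eqP; apply/negP => /negP tk.
have e0 : 0 < nc (t k).
  rewrite lt_def nc_ge0 andbT; apply/eqP => /nc_eq0 E; by rewrite E eqxx in tk.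
case: (ltgtP (nc mu) 1) Hmu => // [lt1|gt1] _; last first.
  apply: (no_unbounded gt1 e0) => n.
  by rewrite mulrC -ncX -ncM -Hn.
have [mu0|mu0] := eqVneq mu 0.
  have := Ht (k - 1); rewrite subrK mu0 mul0r => E; by rewrite E eqxx in tk.
have nm0 : 0 < nc mu.
  rewrite lt_def nc_ge0 andbT; apply/eqP => /nc_eq0 E; by rewrite E eqxx in mu0.
have y1 : 1 < (nc mu)^-1 by rewrite invf_gt1.
apply: (no_unbounded y1 e0) => n.
have := Hn (k - n%:Z) n; rewrite subrK => ->.
rewrite ncM ncX exprVn mulrAC mulfV ?mul1r ?HB //.
by rewrite expf_neq0 // gt_eqF.
Qed.

Lemma rec2 (s : int -> R[i]) (mu1 mu2 : R[i]) (B : R) :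
  (forall k, s (k + 1 + 1) = (mu1 + mu2) * s (k + 1) - mu1 * mu2 * s k) ->
  (forall k, nc (s k) <= B) -> nc mu1 != 1 -> nc mu2 != 1 -> forall k, s k = 0.
Proof.
move=> Hs HB H1 H2.
pose t k := s (k + 1) - mu2 * s k.
have Ht : forall k, t (k + 1) = mu1 * t k.
  move=> k; rewrite /t Hs; ring.
have HBt : forall k, nc (t k) <= B + nc mu2 * B.
  move=> k; apply: le_trans (ncD _ _) _; rewrite /t ncN ncM.
  by apply: lerD => //; apply: ler_wpM2l; [exact: nc_ge0|].
have T0 := geo Ht HBt H1.
have Hs' : forall k, s (k + 1) = mu2 * s k.
  by move=> k; apply/eqP; rewrite -subr_eq0; apply/eqP; apply: T0.
exact: geo Hs' HB H2.
Qed.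
End Aux.

Section B.
Variable R : realType.

Lemma cp2 (A : 'M[R[i]]_2) : char_poly A = 'X^2 - (A 0 0 + A 1 1)%:P * 'X + (A 0 0 * A 1 1 - A 0 1 * A 1 0)%:P.
Proof.
rewrite /char_poly (expand_det_row _ 0) !big_ord_recl big_ord0 /cofactor !det_mx11 /char_poly_mx !mxE /=.
rewrite (_ : lift 0 0 = 1 :> 'I_2); last exact/val_inj.
rewrite (_ : lift 1 0 = 0 :> 'I_2); last exact/val_inj.
rewrite !expr0 !mul1r expr1 !mulr1n !mulr0n !sub0r addr0.
rewrite !polyCD !polyCM !polyCN. ring.
Qed.

Lemma PmatF (c : R) (f : R -> R) (lam : R[i]) (F : 'M[R[i]]_2) z (j : 'I_2) :
  (Pmat c f lam z *m F) 0 j = F 1 j /\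
  (Pmat c f lam z *m F) 1 j = - (((gam c)%:C * (lam ^+ 2 + (cos (f z))%:C)) * F 0 j) + (2 * c * gam c)%:C * lam * F 1 j.
Proof.
rewrite !mxE !big_ord_recl big_ord0 !mxE /=.
rewrite (_ : lift ord0 ord0 = 1 :> 'I_2); last exact/val_inj.
rewrite big_ord0; split; ring.
Qed.

Lemma cosN2pi (x : R) (n : nat) : cos (x + n%:R * (2 * pi)) = cos x.
Proof.
have := periodicn (@cosD2pi R) n x.
by rewrite (_ : 2 * pi = pi *+ 2) // mulr_natl.
Qed.

Lemma cosZ (x : R) (m : int) : cos (x + m%:~R * (2 * pi)) = cos x.
Proof.
case: m => n; first by rewrite cosN2pi.
rewrite NegzE mulNr.
by rewrite -[in RHS](subrK ((n.+1)%:~R * (2 * pi)) x) cosN2pi.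
Qed.

Lemma perZ (g : R -> R[i]) (T : R) : (forall z, g (z + T) = g z) ->
  forall (k : int) z, g (z + k%:~R * T) = g z.
Proof.
move=> H.
have Hn : forall (n : nat) z, g (z + n%:R * T) = g z.
  elim => [|n IH] z; first by rewrite mul0r addr0.
  by rewrite -natr1 mulrDl mul1r addrA H IH.
case=> n z; first exact: Hn.
rewrite NegzE mulNr.
by rewrite -[in RHS](subrK ((n.+1)%:~R * T) z) Hn.
Qed.

Lemma sol_shift Q r v0 v1 (a : R) : sol Q r v0 v1 -> (forall y, Q (y + a) = Q y) ->
  sol Q r (fun y => v0 (y + a)) (fun y => v1 (y + a)).
Proof.
move=> [H0 H1] HQ; split; first exact: CD_shift.
apply: CD_ext; first exact: (CD_shift a H1).
by move=> y /=; rewrite HQ.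
Qed.

Lemma polyfact (a b : R[i]) : 'X^2 - (a + b)%:P * 'X + (a * b)%:P = ('X - a%:P) * ('X - b%:P).
Proof. rewrite polyCD polyCM; ring. Qed.
End B.

Unset Implicit Arguments. Set Strict Implicit.

Theorem lemma3p4 (R : realType) (c : R) (f : R -> R) (E T : R) :
  c != 0 -> c ^+ 2 != 1 ->
  periodic_traveling_wave c f E T ->
  forall lam : R[i], in_sigmaP c f lam -> complex.Re lam != 0 ->
  forall F : R -> 'M[R[i]]_2, fundamental_matrix c f lam F ->
  (* Floquet multipliers mu1, mu2 = eigenvalues (with multiplicity) of F(T) *)
  exists mu1 mu2 : R[i],
    char_poly (F T) = ('X - mu1%:P) * ('X - mu2%:P) /\
    ((`|mu1| = 1 /\ `|mu2| <> 1) \/ (`|mu1| <> 1 /\ `|mu2| = 1)).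
Proof.
move=> c0 c1 [_ [_ [_ [T0 [Tper _]]]]] lam [p [[p1 [p2 [Hp [Hp1 Heq]]]] [[z0 pz0] [Mb HMb]]]] Relam F [F0 HF].
pose g := gam c.
pose Q z := g%:C * (lam ^+ 2 + (cos (f z))%:C).
pose r := (2 * c * g)%:C * lam.
have HQT : forall z, Q (z + T) = Q z.
  by move=> z; rewrite /Q; have [k ->] := Tper z; rewrite cosZ.
have HQk := perZ HQT.
have Hcol : forall j : 'I_2, sol Q r (fun z => F z 0 j) (fun z => F z 1 j).
  move=> j; split.
    apply: CD_ext; first exact: (HF 0 j).
    by move=> z; have [-> _] := PmatF c f lam (F z) z j.
  apply: CD_ext; first exact: (HF 1 j).
  by move=> z; have [_ ->] := PmatF c f lam (F z) z j.
have e00 : F 0 0 0 = 1 by rewrite F0 mxE.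
have e10 : F 0 1 0 = 0 by rewrite F0 mxE.
have e01 : F 0 0 1 = 0 by rewrite F0 mxE.
have e11 : F 0 1 1 = 1 by rewrite F0 mxE.
have Huniq := sol_uniq (Hcol 0) (Hcol 1) e00 e10 e01 e11.
have Hsol : sol Q r p p1.
  split => //; apply: CD_ext Hp1 _ => z.
  have := Heq z => EE.
  transitivity (p2 z - (p2 z - (2 * c * gam c)%:C * lam * p1 z + (gam c)%:C * (lam ^+ 2 + (cos (f z))%:C) * p z)).
    by rewrite EE subr0.
  rewrite /Q /r /g; ring.
have Hd := CD_wr (Hcol 0) (Hcol 1).
have GD := growth Hd T.
rewrite /= e00 e11 e01 e10 (_ : 1 * 1 - 0 * 0 = 1) ?Nc1 ?mul1r in GD; last by ring.
pose m00 := F T 0 0; pose m01 := F T 0 1; pose m10 := F T 1 0; pose m11 := F T 1 1.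
pose tau := m00 + m11.
pose del := m00 * m11 - m01 * m10.
have g0 : g != 0 by rewrite /g /gam invr_eq0 subr_eq0.
have Rer : complex.Re r = 2 * c * g * complex.Re lam.
  by rewrite /r; case: (lam) => a b /=; ring.
have Ndel : Nc del != 1.
  rewrite /del /m00 /m01 /m10 /m11 GD Rer; apply/eqP => /(congr1 (@ln R)).
  rewrite expRK ln1 => /eqP; apply/negP.
  by rewrite !mulf_neq0 ?pnatr_eq0 // gt_eqF.
pose Dl := sqrtC (tau ^+ 2 - 4 * del).
have HDl : Dl ^+ 2 = tau ^+ 2 - 4 * del by rewrite /Dl sqrtCK.
pose mu1 := (tau + Dl) / 2.
pose mu2 := (tau - Dl) / 2.
have two0 : (2 : R[i]) != 0 by rewrite pnatr_eq0.
have Hsum : mu1 + mu2 = tau by rewrite /mu1 /mu2; field.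
have Hprod : mu1 * mu2 = del.
  transitivity ((tau ^+ 2 - Dl ^+ 2) / 4); first by rewrite /mu1 /mu2; field.
  have four0 : (4 : R[i]) != 0 by rewrite pnatr_eq0.
  by rewrite HDl; field.
exists mu1, mu2; split.
  rewrite cp2 -/m00 -/m01 -/m10 -/m11 -/tau -/del -Hsum -Hprod; exact: polyfact.
have nE : forall w : R[i], (`|w| = 1) <-> (nc w = 1).
  by move=> w; rewrite normE; split => [/complexI|->].
rewrite !nE.
have [h1|h1] := eqVneq (nc mu1) 1; have [h2|h2] := eqVneq (nc mu2) 1.
- exfalso; move: Ndel; rewrite -Hprod.
  have : nc (mu1 * mu2) = 1 by rewrite ncM h1 h2 mulr1.
  move=> H; have : Nc (mu1 * mu2) = 1.
    by rewrite -[LHS]sqr_sqrtr ?Nc_ge0 // -/(nc _) H expr1n.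
  by move=> EE; rewrite EE eqxx.
- by left; split => //; apply/eqP.
- by right; split => //; apply/eqP.
exfalso.
pose X0 (k : int) := p (k%:~R * T).
pose X1 (k : int) := p1 (k%:~R * T).
have Hk : forall (k : int) (y : R), (p (y + k%:~R * T) = F y 0 0 * X0 k + F y 0 1 * X1 k) /\ (p1 (y + k%:~R * T) = F y 1 0 * X0 k + F y 1 1 * X1 k).
  move=> k y; have := Huniq _ _ (sol_shift (a:=k%:~R * T) Hsol (fun y => HQk k y)) y.
  by rewrite /= !add0r.
have step : forall k : int, (X0 (k + 1) = m00 * X0 k + m01 * X1 k) /\ (X1 (k + 1) = m10 * X0 k + m11 * X1 k).
  move=> k; have [A B] := Hk k T.
  rewrite /X0 /X1 intrD mulrDl mul1r addrC; split; [exact: A| exact: B].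
pose s k := p (z0 + k%:~R * T).
have Hs : forall k, s k = F z0 0 0 * X0 k + F z0 0 1 * X1 k.
  by move=> k; rewrite /s; have [-> _] := Hk k z0.
have rec : forall k, s (k + 1 + 1) = (mu1 + mu2) * s (k + 1) - mu1 * mu2 * s k.
  move=> k; rewrite Hsum Hprod !Hs.
  have [a0 a1] := step (k + 1); have [b0 b1] := step k.
  rewrite a0 a1 b0 b1 /tau /del; ring.
have bnd : forall k, nc (s k) <= Mb.
  by move=> k; have := HMb (z0 + k%:~R * T); rewrite normE lecR.
have := rec2 rec bnd h1 h2 0; rewrite /s mul0r addr0 => EE.
by rewrite EE eqxx in pz0.
Qed.
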